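(* Let $E$ be a uniformly smooth real Banach space, $D\subseteq E$ a nonempty closed convex subset, and $T:D\to D$ a nonexpansive mapping with $F(T)\neq\emptyset$. Let $f_n,g_n:D\to D$ ($n\ge0$) be mappings, and let $\{x_n\}$ be defined by $x_0\in D$ and, for $n\ge0$, $$y_n=\beta_n g_n(x_n)+(1-\beta_n)Tx_n,\qquad x_{n+1}=\alpha_n f_n(x_n)+(1-\alpha_n)Ty_n.$$ Assume: (i) there is $L\in(0,1)$ with $\|f_n(x)-f_n(y)\|\le L\|x-y\|$ for all $x,y\in D$ and all $n$, and $f_n\to f$ uniformly on $D$ for some $f\in\Pi_D$; (ii) there are a constant $M>0$ and nonnegative numbers $\delta_n$ with $\sum_{n=0}^\infty\delta_n<\infty$ such that $\beta_n\|g_n(x)-x\|\le\delta_n(\|x\|+M)$ for all $x\in D$ and all $n$; (iii) $\alpha_n\in[0,1]$, $\alpha_n\to0$ and $\sum_{n=0}^\infty\alpha_n=\infty$; (iv) $\beta_n\in(0,1]$; (v) $\{x_n\}$ is bounded and $\|Tx_n-x_n\|\to0$. Then $\{x_n\}$ converges strongly to $Q(f)$.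
   Context: $F(T)=\{x\in D: Tx=x\}$ denotes the fixed point set of $T$. $\Pi_D$ denotes the set of contractions on $D$: maps $f:D\to D$ for which there is $\alpha\in(0,1)$ with $\|f(x)-f(y)\|\le\alpha\|x-y\|$ for all $x,y\in D$. For $f\in\Pi_D$ and $t\in(0,1)$, let $x_t\in D$ be the unique solution of $x_t=tf(x_t)+(1-t)Tx_t$. When $E$ is uniformly smooth and $F(T)\neq\emptyset$, the strong limit $\lim_{t\to0^+}x_t$ exists and lies in $F(T)$ (a known result of Xu); the map $Q:\Pi_D\to F(T)$ is defined by $Q(f):=\lim_{t\to0^+}x_t$. *)

(* Defs.v *)
From Stdlib Require Import Reals.
Open Scope R_scope.

Record RBanach := {
  car :> Type;
  vzero : car;
  vadd : car -> car -> car;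
  vopp : car -> car;
  vscal : R -> car -> car;
  vnorm : car -> R;
  vadd_assoc : forall x y z, vadd x (vadd y z) = vadd (vadd x y) z;
  vadd_comm : forall x y, vadd x y = vadd y x;
  vadd_0 : forall x, vadd x vzero = x;
  vadd_opp : forall x, vadd x (vopp x) = vzero;
  vscal_1 : forall x, vscal 1 x = x;
  vscal_assoc : forall a b x, vscal a (vscal b x) = vscal (a * b) x;
  vscal_distr_v : forall a x y, vscal a (vadd x y) = vadd (vscal a x) (vscal a y);
  vscal_distr_s : forall a b x, vscal (a + b) x = vadd (vscal a x) (vscal b x);
  vnorm_eq0 : forall x, vnorm x = 0 -> x = vzero;
  vnorm_scal : forall a x, vnorm (vscal a x) = Rabs a * vnorm x;
  vnorm_triangle : forall x y, vnorm (vadd x y) <= vnorm x + vnorm y;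
  vcomplete : forall u : nat -> car,
    (forall eps, eps > 0 -> exists N, forall m n, (m >= N)%nat -> (n >= N)%nat ->
        vnorm (vadd (u m) (vopp (u n))) < eps) ->
    exists l, forall eps, eps > 0 -> exists N, forall n, (n >= N)%nat ->
        vnorm (vadd (u n) (vopp l)) < eps
}.

Arguments vzero {_}.
Arguments vadd {_} _ _.
Arguments vopp {_} _.
Arguments vscal {_} _ _.
Arguments vnorm {_} _.

Definition vsub {E : RBanach} (x y : E) : E := vadd x (vopp y).

(** Uniform smoothness: the modulus of smoothness
    rho(tau) = sup { (|x+y| + |x-y|)/2 - 1 : |x| = 1, |y| <= tau }
    satisfies rho(tau)/tau -> 0 as tau -> 0+. *)
Definition uniformly_smooth (E : RBanach) : Prop :=
  forall eps, eps > 0 -> exists eta, eta > 0 /\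
    forall tau, 0 < tau < eta -> forall x y : E, vnorm x = 1 -> vnorm y <= tau ->
      (vnorm (vadd x y) + vnorm (vsub x y)) / 2 - 1 <= eps * tau.

Definition bclosed_set {E : RBanach} (D : E -> Prop) : Prop :=
  forall (u : nat -> E) (l : E), (forall n, D (u n)) ->
    (forall eps, eps > 0 -> exists N, forall n, (n >= N)%nat -> vnorm (vsub (u n) l) < eps) ->
    D l.

Definition bconvex_set {E : RBanach} (D : E -> Prop) : Prop :=
  forall x y t, D x -> D y -> 0 <= t <= 1 -> D (vadd (vscal t x) (vscal (1 - t) y)).

Definition maps_into {E : RBanach} (D : E -> Prop) (g : E -> E) : Prop :=
  forall x, D x -> D (g x).

Definition nonexpansive_on {E : RBanach} (D : E -> Prop) (T : E -> E) : Prop :=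
  forall x y, D x -> D y -> vnorm (vsub (T x) (T y)) <= vnorm (vsub x y).

Definition contraction_on {E : RBanach} (D : E -> Prop) (f : E -> E) : Prop :=
  maps_into D f /\ exists a, 0 < a < 1 /\
    forall x y, D x -> D y -> vnorm (vsub (f x) (f y)) <= a * vnorm (vsub x y).

Definition seq_conv {E : RBanach} (u : nat -> E) (l : E) : Prop :=
  forall eps, eps > 0 -> exists N, forall n, (n >= N)%nat -> vnorm (vsub (u n) l) < eps.

Definition is_Q {E : RBanach} (D : E -> Prop) (T f : E -> E) (q : E) : Prop :=
  forall xt : R -> E,
    (forall t, 0 < t < 1 -> D (xt t) /\
        xt t = vadd (vscal t (f (xt t))) (vscal (1 - t) (T (xt t)))) ->
    forall eps, eps > 0 -> exists d, d > 0 /\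
      forall t, 0 < t < d -> vnorm (vsub (xt t) q) < eps.

(* Main.v *)
Require Import Defs.
From Stdlib Require Import Reals Lra Lia Psatz List.
Open Scope R_scope.

Lemma vadd_0l {E : RBanach} (x : E) : vadd vzero x = x.
Proof. rewrite vadd_comm; apply vadd_0. Qed.

Lemma vadd_cancel {E : RBanach} (a x y : E) : vadd a x = vadd a y -> x = y.
Proof.
  intro H.
  assert (H2: vadd (vopp a) (vadd a x) = vadd (vopp a) (vadd a y)) by (rewrite H; reflexivity).
  rewrite !vadd_assoc in H2.
  rewrite (vadd_comm _ (vopp a) a), vadd_opp, !vadd_0l in H2. exact H2.
Qed.

Lemma vscal_0 {E : RBanach} (x : E) : vscal 0 x = vzero.
Proof.
  apply (vadd_cancel (vscal 0 x)).
  rewrite <- vscal_distr_s, vadd_0. f_equal. ring.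
Qed.

Lemma vscal_zero {E : RBanach} (r : R) : vscal r (@vzero E) = vzero.
Proof.
  apply (vadd_cancel (vscal r vzero)).
  rewrite <- vscal_distr_v, !vadd_0. reflexivity.
Qed.

Lemma vopp_scal {E : RBanach} (x : E) : vopp x = vscal (-1) x.
Proof.
  apply (vadd_cancel x).
  rewrite vadd_opp. rewrite <- (vscal_1 _ x) at 1.
  rewrite <- vscal_distr_s. replace (1 + -1) with 0 by ring. now rewrite vscal_0.
Qed.

Inductive vt : Type := VA (n : nat) | V0 | VAdd (a b : vt) | VOpp (a : vt) | VSc (r : R) (a : vt).

Fixpoint veval {E : RBanach} (env : list E) (t : vt) : E :=
  match t with
  | VA n => nth n env vzero
  | V0 => vzero
  | VAdd a b => vadd (veval env a) (veval env b)
  | VOpp a => vopp (veval env a)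
  | VSc r a => vscal r (veval env a)
  end.

Fixpoint coef (t : vt) (i : nat) : R :=
  match t with
  | VA n => if Nat.eqb n i then 1 else 0
  | V0 => 0
  | VAdd a b => coef a i + coef b i
  | VOpp a => - coef a i
  | VSc r a => r * coef a i
  end.

Fixpoint nfs {E : RBanach} (env : list E) (c : nat -> R) : E :=
  match env with
  | nil => vzero
  | x :: env' => vadd (vscal (c O) x) (nfs env' (fun i => c (S i)))
  end.

Lemma nfs_ext {E : RBanach} (env : list E) : forall c d,
  (forall i, (i < length env)%nat -> c i = d i) -> nfs env c = nfs env d.
Proof.
  induction env as [|x env IH]; intros c d H; simpl; auto.
  rewrite (H O) by (simpl; lia). f_equal. apply IH. intros i Hi. apply H. simpl; lia.
Qed.

Lemma nfs_zero {E : RBanach} (env : list E) : nfs env (fun _ => 0) = vzero.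
Proof.
  induction env as [|x env IH]; simpl; auto. rewrite IH, vscal_0, vadd_0; auto.
Qed.

Lemma swap4 {E : RBanach} (a b c d : E) : vadd (vadd a b) (vadd c d) = vadd (vadd a c) (vadd b d).
Proof.
  rewrite !vadd_assoc. f_equal. rewrite <- !vadd_assoc. f_equal. apply vadd_comm.
Qed.

Lemma nfs_add {E : RBanach} (env : list E) : forall c d,
  nfs env (fun i => c i + d i) = vadd (nfs env c) (nfs env d).
Proof.
  induction env as [|x env IH]; intros c d; simpl. now rewrite vadd_0.
  rewrite IH, vscal_distr_s. apply swap4.
Qed.

Lemma nfs_scal {E : RBanach} (env : list E) : forall r c,
  nfs env (fun i => r * c i) = vscal r (nfs env c).
Proof.
  induction env as [|x env IH]; intros r c; simpl. now rewrite vscal_zero.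
  rewrite IH, vscal_distr_v, vscal_assoc. reflexivity.
Qed.

Lemma nfs_atom {E : RBanach} (env : list E) : forall n,
  nfs env (fun i => if Nat.eqb n i then 1 else 0) = nth n env vzero.
Proof.
  induction env as [|x env IH]; intros n; simpl. destruct n; reflexivity.
  destruct n as [|n]; simpl.
  - rewrite vscal_1, nfs_zero, vadd_0; auto.
  - rewrite vscal_0, vadd_0l. apply IH.
Qed.

Lemma veval_nfs {E : RBanach} (env : list E) (t : vt) : veval env t = nfs env (coef t).
Proof.
  induction t; simpl.
  - symmetry; apply nfs_atom.
  - symmetry; apply nfs_zero.
  - rewrite IHt1, IHt2, nfs_add. reflexivity.
  - rewrite IHt, vopp_scal, <- nfs_scal. apply nfs_ext. intros; ring.
  - rewrite IHt, <- nfs_scal. reflexivity.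
Qed.

Fixpoint allc (n : nat) (P : nat -> Prop) : Prop :=
  match n with O => True | S n => allc n P /\ P n end.

Lemma allc_lt n P : allc n P -> forall i, (i < n)%nat -> P i.
Proof.
  induction n; simpl; intros H i Hi. lia. destruct H as [H1 H2].
  destruct (Nat.eq_dec i n). subst; auto. apply IHn; auto; lia.
Qed.

Lemma veval_eq {E : RBanach} (env : list E) (t1 t2 : vt) :
  allc (length env) (fun i => coef t1 i = coef t2 i) -> veval env t1 = veval env t2.
Proof.
  intro H. rewrite !veval_nfs. apply nfs_ext. apply allc_lt; auto.
Qed.

Ltac vfind x l :=
  lazymatch l with
  | (x :: _) => constr:(O)
  | (_ :: ?l') => let n := vfind x l' in constr:(S n)
  end.

Ltac vcollect t l :=
  lazymatch t with
  | vadd ?a ?b => let l1 := vcollect a l in vcollect b l1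
  | vsub ?a ?b => let l1 := vcollect a l in vcollect b l1
  | vopp ?a => vcollect a l
  | vscal _ ?a => vcollect a l
  | vzero => l
  | _ => match constr:(tt) with
         | _ => let n := vfind t l in l
         | _ => constr:(t :: l)
         end
  end.

Ltac vreify t l :=
  lazymatch t with
  | vadd ?a ?b => let a' := vreify a l in let b' := vreify b l in constr:(VAdd a' b')
  | vsub ?a ?b => let a' := vreify a l in let b' := vreify b l in constr:(VAdd a' (VOpp b'))
  | vopp ?a => let a' := vreify a l in constr:(VOpp a')
  | vscal ?r ?a => let a' := vreify a l in constr:(VSc r a')
  | vzero => constr:(V0)
  | _ => let n := vfind t l in constr:(VA n)
  end.

Ltac vprep :=
  lazymatch goal with
  | |- @eq (car ?E) ?X ?Y =>
      let l0 := vcollect X (@nil (car E)) in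
      let l := vcollect Y l0 in
      let tx := vreify X l in
      let ty := vreify Y l in
      change (veval l tx = veval l ty); apply veval_eq; simpl
  end.

Ltac vring := vprep; repeat split; ring.
Ltac vfield := vprep; repeat split; field.

Lemma test {E : RBanach} (a b c : E) (t : R) :
  vsub (vadd (vscal t a) (vscal (1 - t) b)) c = vadd (vscal t (vsub a c)) (vscal (1-t) (vsub b c)).
Proof. vring. Qed.

Lemma vnorm_zero {E : RBanach} : vnorm (@vzero E) = 0.
Proof. rewrite <- (vscal_0 (@vzero E)), vnorm_scal, Rabs_R0; ring. Qed.

Lemma vnorm_opp {E : RBanach} (x : E) : vnorm (vopp x) = vnorm x.
Proof. rewrite vopp_scal, vnorm_scal. replace (Rabs (-1)) with 1 by (unfold Rabs; destruct Rcase_abs; lra). ring. Qed.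

Lemma vnorm_nonneg {E : RBanach} (x : E) : 0 <= vnorm x.
Proof.
  pose proof (vnorm_triangle _ x (vopp x)) as H.
  rewrite vadd_opp, vnorm_zero, vnorm_opp in H. lra.
Qed.

Lemma vnorm_sub_sym {E : RBanach} (x y : E) : vnorm (vsub x y) = vnorm (vsub y x).
Proof.
  rewrite <- vnorm_opp. f_equal. vring.
Qed.

Lemma vsub_eq0 {E : RBanach} (x y : E) : vnorm (vsub x y) = 0 -> x = y.
Proof.
  intro H. apply vnorm_eq0 in H.
  replace x with (vadd (vsub x y) y) by vring. rewrite H. vring.
Qed.

Lemma vnorm_sub_self {E : RBanach} (x : E) : vnorm (vsub x x) = 0.
Proof. replace (vsub x x) with (@vzero E) by vring. apply vnorm_zero. Qed.

Lemma vtri {E : RBanach} (x y : E) : vnorm (vadd x y) <= vnorm x + vnorm y.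
Proof. apply vnorm_triangle. Qed.

Lemma vtri_sub {E : RBanach} (x y z : E) : vnorm (vsub x z) <= vnorm (vsub x y) + vnorm (vsub y z).
Proof.
  replace (vsub x z) with (vadd (vsub x y) (vsub y z)) by vring. apply vtri.
Qed.

Lemma vnorm_scal_p {E : RBanach} (a : R) (x : E) : 0 <= a -> vnorm (vscal a x) = a * vnorm x.
Proof. intro. rewrite vnorm_scal, Rabs_pos_eq; auto. Qed.

Lemma vnorm_sub_le {E : RBanach} (x y : E) : vnorm x <= vnorm y + vnorm (vsub x y).
Proof.
  replace x with (vadd y (vsub x y)) at 1 by vring. apply vtri.
Qed.

Lemma sq_diff {E : RBanach} (A B : E) :
  vnorm A ^ 2 - vnorm B ^ 2 <= vnorm (vsub A B) * (vnorm A + vnorm B).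
Proof.
  pose proof (vnorm_sub_le A B). pose proof (vnorm_nonneg A). pose proof (vnorm_nonneg B).
  nra.
Qed.

Lemma conv_sq {E : RBanach} (l : R) (p q : E) : 0 <= l <= 1 ->
  vnorm (vadd (vscal l p) (vscal (1 - l) q)) ^ 2 <= l * vnorm p ^ 2 + (1 - l) * vnorm q ^ 2.
Proof.
  intro Hl. pose proof (vtri (vscal l p) (vscal (1-l) q)).
  rewrite !vnorm_scal_p in H by lra.
  pose proof (vnorm_nonneg p). pose proof (vnorm_nonneg q).
  pose proof (vnorm_nonneg (vadd (vscal l p) (vscal (1 - l) q))).
  assert (0 <= l * vnorm p + (1 - l) * vnorm q) by nra.
  apply Rle_trans with ((l * vnorm p + (1 - l) * vnorm q) ^ 2). nra.
  assert (0 <= l * (1-l) * (vnorm p - vnorm q)^2) by (apply Rmult_le_pos; [nra| apply pow2_ge_0]).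
  nra.
Qed.

Lemma slope3 {E : RBanach} (u y : E) (s s' : R) : 0 < s -> 0 < s' ->
  s * (vnorm u ^ 2 - vnorm (vsub u (vscal s' y)) ^ 2)
  <= s' * (vnorm (vadd u (vscal s y)) ^ 2 - vnorm u ^ 2).
Proof.
  intros Hs Hs'.
  set (l := s / (s + s')).
  assert (Hl : 0 <= l <= 1).
  { unfold l. assert (0 < / (s + s')) by (apply Rinv_0_lt_compat; lra).
    split. unfold Rdiv; apply Rmult_le_pos; lra.
    apply Rmult_le_reg_r with (s + s'); [lra|]. unfold Rdiv; rewrite Rmult_assoc, Rinv_l; lra. }
  pose proof (conv_sq l (vsub u (vscal s' y)) (vadd u (vscal s y)) Hl) as H.
  replace (vadd (vscal l (vsub u (vscal s' y))) (vscal (1 - l) (vadd u (vscal s y)))) with u in H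
    by (unfold l; vfield; lra).
  assert (Hl1 : l * (s + s') = s) by (unfold l; field; lra).
  assert (Hl2 : (1 - l) * (s + s') = s') by (unfold l; field; lra).
  assert (H2 : (s + s') * vnorm u ^ 2 <= (s+s') * (l * vnorm (vsub u (vscal s' y)) ^ 2 +
     (1 - l) * vnorm (vadd u (vscal s y)) ^ 2)) by (apply Rmult_le_compat_l; lra).
  nra.
Qed.

Lemma le_div_mul (a b c : R) : 0 < c -> a <= b / c -> a * c <= b.
Proof. intros Hc H. apply Rmult_le_compat_r with (r := c) in H; [|lra].
  replace (b / c * c) with b in H by (field; lra). lra. Qed.
Lemma lt_div_mul (a b c : R) : 0 < c -> a < b / c -> a * c < b.
Proof. intros Hc H. apply Rmult_lt_compat_r with (r := c) in H; [|lra].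
  replace (b / c * c) with b in H by (field; lra). lra. Qed.

Lemma us_gap {E : RBanach} (HE : uniformly_smooth E) (eps K : R) : eps > 0 -> K > 0 ->
  exists s0, s0 > 0 /\ forall s (u z : E), 0 < s < s0 -> vnorm u <= K -> vnorm z <= K ->
    vnorm (vadd u (vscal s z)) ^ 2 + vnorm (vsub u (vscal s z)) ^ 2 - 2 * vnorm u ^ 2 <= eps * s.
Proof.
  intros He HK.
  set (e0 := Rmin 1 (eps / (8 * K * (K + 1)))).
  assert (He0 : 0 < e0).
  { unfold e0. apply Rmin_glb_lt. lra. apply Rdiv_lt_0_compat; nra. }
  assert (He01 : e0 <= 1) by apply Rmin_l.
  assert (He02 : e0 * (8 * K * (K + 1)) <= eps).
  { assert (e0 <= eps / (8 * K * (K + 1))) by apply Rmin_r.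
    apply le_div_mul; auto; nra. }
  destruct (HE e0 He0) as [eta [Heta HUS]].
  set (C := 4 * K * (K + 1) / eta + 2 * K ^ 2).
  assert (HC : 0 <= C).
  { unfold C. assert (0 <= 4 * K * (K + 1) / eta). apply Rlt_le, Rdiv_lt_0_compat; nra. nra. }
  exists (Rmin (eps / (8 * (K + 1) ^ 2)) (eps / (C + 1))).
  split. { apply Rmin_glb_lt; apply Rdiv_lt_0_compat; nra. }
  intros s u z Hs Hu Hz.
  assert (Hs1 : s * (8 * (K + 1) ^ 2) <= eps).
  { assert (s < eps / (8 * (K + 1) ^ 2)) by (eapply Rlt_le_trans; [apply Hs| apply Rmin_l]).
    left; apply lt_div_mul; auto; nra. }
  assert (Hs2 : s * (C + 1) <= eps).
  { assert (s < eps / (C + 1)) by (eapply Rlt_le_trans; [apply Hs| apply Rmin_r]).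
    left; apply lt_div_mul; auto; nra. }
  set (N := vnorm u). set (Z := vnorm z).
  assert (HuK : N <= K) by exact Hu. assert (HzK : Z <= K) by exact Hz.
  assert (HN : 0 <= N) by apply vnorm_nonneg. assert (HZ : 0 <= Z) by apply vnorm_nonneg.
  destruct (Rlt_dec (s * (Z + 1)) (eta * N)) as [Hc | Hc].
  - assert (HNp : 0 < N) by nra.
    set (tau := s * (Z + 1) / N).
    assert (Htau : N * tau = s * (Z + 1)) by (unfold tau; field; lra).
    assert (Htau0 : 0 < tau < eta).
    { split. unfold tau; apply Rdiv_lt_0_compat; nra. nra. }
    set (x := vscal (1 / N) u). set (y := vscal (s / N) z).
    assert (Hx : vnorm x = 1).
    { unfold x. rewrite vnorm_scal_p. fold N. field. lra. apply Rlt_le, Rdiv_lt_0_compat; lra. }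
    assert (Hy : vnorm y <= tau).
    { unfold y, tau. rewrite vnorm_scal_p. fold Z. unfold Rdiv.
      assert (0 < / N) by (apply Rinv_0_lt_compat; lra). nra.
      apply Rlt_le, Rdiv_lt_0_compat; lra. }
    pose proof (HUS tau Htau0 x y Hx Hy) as H.
    assert (E1 : vadd u (vscal s z) = vscal N (vadd x y)) by (unfold x, y; vfield; lra).
    assert (E2 : vsub u (vscal s z) = vscal N (vsub x y)) by (unfold x, y; vfield; lra).
    rewrite E1, E2, !vnorm_scal_p by lra.
    set (P := vnorm (vadd x y)). set (Q := vnorm (vsub x y)). fold P Q in H.
    assert (HP0 : 0 <= P) by apply vnorm_nonneg. assert (HQ0 : 0 <= Q) by apply vnorm_nonneg.
    assert (HPQ : P <= Q + 2 * vnorm y).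
    { unfold P, Q. replace (vadd x y) with (vadd (vsub x y) (vscal 2 y)) by vring.
      rewrite <- vnorm_scal_p by lra. apply vtri. }
    assert (HQP : Q <= P + 2 * vnorm y).
    { unfold P, Q. replace (vsub x y) with (vsub (vadd x y) (vscal 2 y)) by vring.
      rewrite <- vnorm_scal_p by lra. unfold vsub at 1. rewrite <- (vnorm_opp (vscal 2 y)).
      apply vtri. }
    assert (Hsum : P + Q <= 2 + 2 * e0 * tau) by lra.
    assert (Hdif : (P - Q) ^ 2 <= 4 * tau ^ 2).
    { pose proof (vnorm_nonneg y). nra. }
    assert (HPQ2 : P ^ 2 + Q ^ 2 <= 2 + 4 * e0 * tau + 2 * e0 ^ 2 * tau ^ 2 + 2 * tau ^ 2).
    { assert ((P + Q) ^ 2 <= (2 + 2 * e0 * tau) ^ 2).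
      { apply pow_incr. nra. }
      nra. }
    assert (H3 : (N * P) ^ 2 + (N * Q) ^ 2 - 2 * N ^ 2
                 <= 4 * e0 * N * (N * tau) + 2 * e0 ^ 2 * (N * tau) ^ 2 + 2 * (N * tau) ^ 2).
    { assert (0 <= N ^ 2) by nra. nra. }
    rewrite Htau in H3.
    assert (H4 : 4 * e0 * N * (s * (Z + 1)) <= s * (e0 * (8 * K * (K + 1))) / 2).
    { assert (N * (Z + 1) <= K * (K + 1)) by (apply Rmult_le_compat; unfold N, Z in *; lra).
      assert (0 <= 4 * e0 * s) by nra.
      assert (4 * e0 * s * (N * (Z + 1)) <= 4 * e0 * s * (K * (K + 1))) by (apply Rmult_le_compat_l; lra).
      nra. }
    assert (H5 : 2 * e0 ^ 2 * (s * (Z + 1)) ^ 2 + 2 * (s * (Z + 1)) ^ 2 <= s * (s * (8 * (K + 1) ^ 2)) / 2).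
    { assert (e0 ^ 2 <= 1) by nra. assert ((Z + 1) ^ 2 <= (K + 1) ^ 2) by (apply pow_incr; lra).
      assert (0 <= s ^ 2) by nra.
      assert (s ^ 2 * (Z + 1) ^ 2 <= s ^ 2 * (K + 1) ^ 2) by (apply Rmult_le_compat_l; lra).
      assert (0 <= s ^ 2 * (Z + 1) ^ 2) by nra.
      assert ((2 * e0 ^ 2 + 2) * (s ^ 2 * (Z + 1) ^ 2) <= 4 * (s ^ 2 * (Z + 1) ^ 2)) by (apply Rmult_le_compat_r; lra).
      replace (2 * e0 ^ 2 * (s * (Z + 1)) ^ 2 + 2 * (s * (Z + 1)) ^ 2) with ((2 * e0 ^ 2 + 2) * (s ^ 2 * (Z + 1) ^ 2)) by ring.
      nra. }
    assert (s * (e0 * (8 * K * (K + 1))) <= s * eps) by (apply Rmult_le_compat_l; lra).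
    assert (s * (s * (8 * (K + 1) ^ 2)) <= s * eps) by (apply Rmult_le_compat_l; lra).
    nra.
  - apply Rnot_lt_le in Hc.
    assert (Ha : vnorm (vadd u (vscal s z)) <= N + s * Z).
    { unfold N, Z. rewrite <- vnorm_scal_p by lra. apply vtri. }
    assert (Hb : vnorm (vsub u (vscal s z)) <= N + s * Z).
    { unfold N, Z. rewrite <- vnorm_scal_p by lra. unfold vsub. rewrite <- (vnorm_opp (vscal s z)). apply vtri. }
    assert (H1 : vnorm (vadd u (vscal s z)) ^ 2 + vnorm (vsub u (vscal s z)) ^ 2 - 2 * N ^ 2
                 <= 4 * N * s * Z + 2 * s ^ 2 * Z ^ 2).
    { pose proof (vnorm_nonneg (vadd u (vscal s z))). pose proof (vnorm_nonneg (vsub u (vscal s z))).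
      assert (vnorm (vadd u (vscal s z)) ^ 2 <= (N + s * Z) ^ 2) by (apply pow_incr; lra).
      assert (vnorm (vsub u (vscal s z)) ^ 2 <= (N + s * Z) ^ 2) by (apply pow_incr; lra).
      nra. }
    assert (HN2 : N <= s * (Z + 1) / eta).
    { apply Rmult_le_reg_l with eta; [lra|]. unfold Rdiv. field_simplify; lra. }
    assert (H2 : 4 * N * s * Z <= s * s * (4 * K * (K + 1) / eta)).
    { assert (s * (Z + 1) / eta <= s * (K + 1) / eta).
      { unfold Rdiv. apply Rmult_le_compat_r. left; apply Rinv_0_lt_compat; lra. nra. }
      assert (4 * N * s * Z <= 4 * (s * (K + 1) / eta) * s * K).
      { assert (0 <= s * Z) by nra.
        assert (N <= s * (K + 1) / eta) by lra.
        assert (N * (s * Z) <= (s * (K + 1) / eta) * (s * K)) by (apply Rmult_le_compat; nra).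
        nra. }
      assert (4 * (s * (K + 1) / eta) * s * K = s * s * (4 * K * (K + 1) / eta)) by (field; lra).
      lra. }
    assert (H3 : 2 * s ^ 2 * Z ^ 2 <= s * s * (2 * K ^ 2)).
    { assert (Z ^ 2 <= K ^ 2) by (apply pow_incr; lra). nra. }
    assert (s * (s * C) <= s * eps) by (apply Rmult_le_compat_l; nra).
    unfold C in *. nra.
Qed.

Lemma le_eps_0 (r : R) : 0 <= r -> (forall eps, eps > 0 -> r <= eps) -> r = 0.
Proof.
  intros H0 H. destruct (Req_dec r 0); auto. specialize (H (r / 2)). lra.
Qed.

Fixpoint iterS {E : RBanach} (S : E -> E) (z0 : E) (m : nat) : E :=
  match m with O => z0 | Datatypes.S m => S (iterS S z0 m) end.

Lemma banach_fp {E : RBanach} (D : E -> Prop) (HDcl : bclosed_set D) (z0 : E) (Hz0 : D z0)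
  (S : E -> E) (HS : maps_into D S) (k : R) (Hk : 0 <= k < 1)
  (Hc : forall x y, D x -> D y -> vnorm (vsub (S x) (S y)) <= k * vnorm (vsub x y)) :
  exists x, D x /\ S x = x.
Proof.
  set (z := iterS S z0).
  assert (HzD : forall m, D (z m)) by (induction m; simpl; [exact Hz0| apply HS; exact IHm]).
  set (d0 := vnorm (vsub (z 1%nat) (z 0%nat))).
  assert (Hd0 : 0 <= d0) by apply vnorm_nonneg.
  assert (Hstep : forall m, vnorm (vsub (z (Datatypes.S m)) (z m)) <= k ^ m * d0).
  { induction m. simpl pow. unfold d0. lra.
    change (z (Datatypes.S (Datatypes.S m))) with (S (z (Datatypes.S m))).
    change (z (Datatypes.S m)) with (S (z m)) at 2.
    eapply Rle_trans. apply Hc; auto. simpl pow.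
    change (S (z m)) with (z (Datatypes.S m)).
    rewrite Rmult_assoc. apply Rmult_le_compat_l; lra. }
  assert (Hdist : forall m p, vnorm (vsub (z (m + p)%nat) (z m)) <= d0 * (k ^ m - k ^ (m + p)) / (1 - k)).
  { intros m p. induction p.
    - rewrite Nat.add_0_r, vnorm_sub_self. replace (k ^ m - k ^ m) with 0 by ring.
      unfold Rdiv. rewrite Rmult_0_r, Rmult_0_l. lra.
    - rewrite Nat.add_succ_r. eapply Rle_trans. apply (vtri_sub _ (z (m + p)%nat)).
      pose proof (Hstep (m + p)%nat).
      replace (d0 * (k ^ m - k ^ Datatypes.S (m + p)) / (1 - k))
        with (d0 * (k ^ m - k ^ (m + p)) / (1 - k) + k ^ (m + p) * d0) by (simpl; field; lra).
      lra. }
  assert (Hdist2 : forall m n, (m <= n)%nat -> vnorm (vsub (z n) (z m)) <= d0 * k ^ m / (1 - k)).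
  { intros m n Hmn. replace n with (m + (n - m))%nat by lia.
    eapply Rle_trans. apply Hdist.
    assert (0 <= k ^ (m + (n - m))) by (apply pow_le; lra).
    unfold Rdiv. apply Rmult_le_compat_r. left; apply Rinv_0_lt_compat; lra. nra. }
  assert (Hcauchy : forall eps, eps > 0 -> exists N, forall m n, (m >= N)%nat -> (n >= N)%nat ->
        vnorm (vadd (z m) (vopp (z n))) < eps).
  { intros eps Heps.
    destruct (pow_lt_1_zero k ltac:(rewrite Rabs_pos_eq; lra) (eps * (1 - k) / (d0 + 1))) as [N HN].
    { apply Rdiv_lt_0_compat; nra. }
    exists N. intros m n Hm Hn.
    assert (Hgen : forall a b, (a >= N)%nat -> (a <= b)%nat -> vnorm (vsub (z b) (z a)) < eps).
    { intros a b Ha Hab. eapply Rle_lt_trans. apply Hdist2; auto.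
      specialize (HN a Ha). rewrite Rabs_pos_eq in HN by (apply pow_le; lra).
      apply Rmult_lt_compat_r with (r := d0 + 1) in HN; [|lra].
      replace (eps * (1 - k) / (d0 + 1) * (d0 + 1)) with (eps * (1 - k)) in HN by (field; lra).
      assert (d0 * k ^ a <= (d0 + 1) * k ^ a). { assert (0 <= k ^ a) by (apply pow_le; lra). nra. }
      apply Rmult_lt_reg_r with (1 - k). lra.
      replace (d0 * k ^ a / (1 - k) * (1 - k)) with (d0 * k ^ a) by (field; lra). nra. }
    destruct (Nat.le_ge_cases m n).
    - change (vadd (z m) (vopp (z n))) with (vsub (z m) (z n)). rewrite vnorm_sub_sym. apply Hgen; auto.
    - apply Hgen; auto. }
  destruct (vcomplete E z Hcauchy) as [l Hl].
  exists l. assert (HDl : D l) by (apply (HDcl z l HzD); exact Hl).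
  split; auto.
  apply vsub_eq0. apply le_eps_0. apply vnorm_nonneg.
  intros eps Heps. destruct (Hl (eps / 2) ltac:(lra)) as [N HN].
  eapply Rle_trans. apply (vtri_sub _ (S (z N))).
  pose proof (Hc l (z N) HDl (HzD N)).
  rewrite (vnorm_sub_sym l (z N)) in H.
  pose proof (HN N ltac:(lia)). pose proof (HN (Datatypes.S N) ltac:(lia)).
  change (vadd (z (Datatypes.S N)) (vopp l)) with (vsub (S (z N)) l) in H1.
  change (vadd (z N) (vopp l)) with (vsub (z N) l) in H0.
  pose proof (vnorm_nonneg (vsub (z N) l)). nra.
Qed.

From Stdlib Require Import IndefiniteDescription Classical.

Lemma comb_sub {E : RBanach} (a b c : E) (t : R) :
  vsub (vadd (vscal t a) (vscal (1 - t) b)) c = vadd (vscal t (vsub a c)) (vscal (1 - t) (vsub b c)).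
Proof. vring. Qed.

Lemma xt_exists {E : RBanach} (D : E -> Prop) (HDne : exists z, D z) (HDcl : bclosed_set D)
  (HDcv : bconvex_set D) (T : E -> E) (HTD : maps_into D T) (HTne : nonexpansive_on D T)
  (f : E -> E) (Hf : contraction_on D f) :
  exists xt : R -> E, forall t, 0 < t < 1 -> D (xt t) /\
        xt t = vadd (vscal t (f (xt t))) (vscal (1 - t) (T (xt t))).
Proof.
  destruct Hf as [HfD [a [Ha Hfa]]]. destruct HDne as [z0 Hz0].
  assert (H : forall t, exists x : E, 0 < t < 1 -> D x /\
        x = vadd (vscal t (f x)) (vscal (1 - t) (T x))).
  { intro t. destruct (classic (0 < t < 1)) as [Ht | Ht].
    - destruct (banach_fp D HDcl z0 Hz0 (fun x => vadd (vscal t (f x)) (vscal (1 - t) (T x))))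
        with (k := t * a + (1 - t)) as [x [Hx1 Hx2]].
      + intros x Hx. apply HDcv; auto; lra.
      + nra.
      + intros x y Hx Hy.
        replace (vsub (vadd (vscal t (f x)) (vscal (1 - t) (T x))) (vadd (vscal t (f y)) (vscal (1 - t) (T y))))
          with (vadd (vscal t (vsub (f x) (f y))) (vscal (1 - t) (vsub (T x) (T y)))) by vring.
        eapply Rle_trans. apply vtri. rewrite !vnorm_scal_p by lra.
        pose proof (Hfa x y Hx Hy). pose proof (HTne x y Hx Hy). nra.
      + exists x. intros _. split; auto.
    - exists z0. intro; contradiction. }
  exists (fun t => proj1_sig (constructive_indefinite_description _ (H t))).
  intros t Ht. destruct (constructive_indefinite_description _ (H t)) as [x Hx]. simpl. auto.
Qed.

Lemma xt_minus_T {E : RBanach} (X F S : E) (t : R) :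
  X = vadd (vscal t F) (vscal (1 - t) S) -> vsub X S = vscal t (vsub F S).
Proof. intro H. subst X. vring. Qed.

Lemma q_props {E : RBanach} (D : E -> Prop) (HDcl : bclosed_set D)
  (T : E -> E) (HTD : maps_into D T) (HTne : nonexpansive_on D T)
  (f : E -> E) (Hf : contraction_on D f) (xt : R -> E)
  (Hxt : forall t, 0 < t < 1 -> D (xt t) /\
        xt t = vadd (vscal t (f (xt t))) (vscal (1 - t) (T (xt t))))
  (q : E) (Hq : forall eps, eps > 0 -> exists d, d > 0 /\
      forall t, 0 < t < d -> vnorm (vsub (xt t) q) < eps) :
  D q /\ T q = q.
Proof.
  destruct Hf as [HfD [a [Ha Hfa]]].
  assert (HDq : D q).
  { apply (HDcl (fun n => xt (/ INR (n + 2)))).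
    - intro n. apply Hxt. split. apply Rinv_0_lt_compat, lt_0_INR; lia.
      rewrite <- Rinv_1. apply Rinv_lt_contravar. rewrite Rmult_1_l; apply lt_0_INR; lia.
      replace 1 with (INR 1) by reflexivity. apply lt_INR; lia.
    - intros eps Heps. destruct (Hq eps Heps) as [d [Hd Hd2]].
      destruct (archimed_cor1 d Hd) as [N [HN1 HN2]].
      exists N. intros n Hn. apply Hd2. split. apply Rinv_0_lt_compat, lt_0_INR; lia.
      eapply Rle_lt_trans; [|exact HN1]. apply Rinv_le_contravar. apply lt_0_INR; lia.
      apply le_INR; lia. }
  split; auto.
  apply vsub_eq0. apply le_eps_0. apply vnorm_nonneg.
  intros eps Heps.
  set (c0 := vnorm (vsub (f q) (T q))). assert (0 <= c0) by apply vnorm_nonneg.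
  destruct (Hq (Rmin 1 (eps / 4)) ltac:(apply Rmin_glb_lt; lra)) as [d [Hd Hd2]].
  set (t := Rmin (d / 2) (Rmin (1 / 2) (eps / (2 * (2 + c0))))).
  assert (Ht : 0 < t < d).
  { unfold t. split. repeat apply Rmin_glb_lt; try lra. apply Rdiv_lt_0_compat; lra.
    eapply Rle_lt_trans. apply Rmin_l. lra. }
  assert (Ht1 : t <= 1 / 2) by (unfold t; eapply Rle_trans; [apply Rmin_r| apply Rmin_l]).
  assert (Ht2 : t <= eps / (2 * (2 + c0))) by (unfold t; eapply Rle_trans; [apply Rmin_r| apply Rmin_r]).
  destruct (Hxt t ltac:(lra)) as [HD HX].
  set (X := xt t) in *.
  pose proof (Hd2 t Ht) as Hdel. fold X in Hdel.
  assert (Hdel1 : vnorm (vsub X q) <= 1) by (pose proof (Rmin_l 1 (eps/4)); lra).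
  assert (Hdel2 : vnorm (vsub X q) <= eps / 4) by (pose proof (Rmin_r 1 (eps/4)); lra).
  eapply Rle_trans. apply (vtri_sub _ (T X)).
  eapply Rle_trans. apply Rplus_le_compat_l. apply (vtri_sub _ X).
  rewrite (vnorm_sub_sym (T X) X), (vnorm_sub_sym (T q) (T X)).
  rewrite (xt_minus_T X (f X) (T X) t HX), vnorm_scal_p by lra.
  assert (H1 : vnorm (vsub (f X) (T X)) <= 2 + c0).
  { eapply Rle_trans. apply (vtri_sub _ (f q)).
    eapply Rle_trans. apply Rplus_le_compat_l. apply (vtri_sub _ (T q)).
    pose proof (Hfa X q HD HDq). pose proof (HTne q X HDq HD).
    rewrite (vnorm_sub_sym q X) in H1. fold c0. nra. }
  pose proof (HTne X q HD HDq).
  assert (t * vnorm (vsub (f X) (T X)) <= eps / 2).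
  { apply Rle_trans with (t * (2 + c0)). apply Rmult_le_compat_l; lra.
    apply Rmult_le_compat_r with (r := 2 + c0) in Ht2; [|lra].
    replace (eps / (2 * (2 + c0)) * (2 + c0)) with (eps / 2) in Ht2 by (field; lra). lra. }
  lra.
Qed.

Lemma vnorm_sub_tri {E : RBanach} (a b : E) : vnorm (vsub a b) <= vnorm a + vnorm b.
Proof. unfold vsub. rewrite <- (vnorm_opp b). apply vtri. Qed.

Lemma sigma0_id {E : RBanach} (X F S Y : E) (t : R) : 0 < t < 1 ->
  X = vadd (vscal t F) (vscal (1 - t) S) ->
  vadd (vsub Y X) (vscal (t / (1 - t)) (vsub F X)) = vsub Y S.
Proof. intros Ht H. subst X. vfield; lra. Qed.

Lemma key_lemma {E : RBanach} (HE : uniformly_smooth E) (D : E -> Prop)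
  (T : E -> E) (HTne : nonexpansive_on D T)
  (f : E -> E) (a : R) (Ha : 0 < a < 1)
  (Hfa : forall x y, D x -> D y -> vnorm (vsub (f x) (f y)) <= a * vnorm (vsub x y))
  (x : nat -> E) (HxD : forall n, D (x n)) (Bx : R) (Hbdd : forall n, vnorm (x n) <= Bx)
  (HTx : Un_cv (fun n => vnorm (vsub (T (x n)) (x n))) 0)
  (xt : R -> E)
  (Hxt : forall t, 0 < t < 1 -> D (xt t) /\
        xt t = vadd (vscal t (f (xt t))) (vscal (1 - t) (T (xt t))))
  (q : E) (HDq : D q) (Hq : forall eps, eps > 0 -> exists d, d > 0 /\
      forall t, 0 < t < d -> vnorm (vsub (xt t) q) < eps) :
  forall eps, eps > 0 -> exists s0, s0 > 0 /\ forall s, 0 < s < s0 -> exists N, forall n, (n >= N)%nat ->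
    vnorm (vadd (vsub (x n) q) (vscal s (vsub (f q) q))) ^ 2 - vnorm (vsub (x n) q) ^ 2 <= eps * s.
Proof.
  intros eps Heps.
  set (w := vsub (f q) q).
  assert (HBx : 0 <= Bx) by (pose proof (Hbdd O); pose proof (vnorm_nonneg (x O)); lra).
  pose proof (vnorm_nonneg q) as Hq0. pose proof (vnorm_nonneg w) as Hw0.
  set (K := Bx + vnorm q + vnorm w + 3).
  assert (HK : K > 0) by (unfold K; lra).
  destruct (us_gap HE (eps / 3) K ltac:(lra) HK) as [s1 [Hs1 Hus]].
  exists (Rmin s1 1). split. apply Rmin_glb_lt; lra.
  intros s Hs.
  assert (Hss1 : s < s1) by (pose proof (Rmin_l s1 1); lra).
  assert (Hs1' : s < 1) by (pose proof (Rmin_r s1 1); lra).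
  set (th := Rmin 1 (eps * s / (24 * K))).
  assert (Hth : 0 < th) by (unfold th; apply Rmin_glb_lt; [lra| apply Rdiv_lt_0_compat; nra]).
  destruct (Hq th Hth) as [d [Hd Hd2]].
  set (t := Rmin (d / 2) (1 / 2)).
  assert (Ht : 0 < t < d) by (unfold t; split; [apply Rmin_glb_lt; lra| pose proof (Rmin_l (d/2) (1/2)); lra]).
  assert (Ht1 : t <= 1 / 2) by (unfold t; apply Rmin_r).
  destruct (Hxt t ltac:(lra)) as [HDX HX].
  set (X := xt t) in *.
  pose proof (Hd2 t Ht) as Hdel. fold X in Hdel.
  set (del := vnorm (vsub X q)) in *.
  assert (Hdel0 : 0 <= del) by apply vnorm_nonneg.
  assert (Hdel1 : del <= 1) by (pose proof (Rmin_l 1 (eps * s / (24 * K))); fold th in H; lra).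
  assert (Hdel2 : 8 * K * del <= eps * s / 3).
  { assert (del <= eps * s / (24 * K)) by (pose proof (Rmin_r 1 (eps * s / (24 * K))); fold th in H; lra).
    apply Rmult_le_compat_l with (r := 8 * K) in H; [|lra].
    replace (8 * K * (eps * s / (24 * K))) with (eps * s / 3) in H by (field; lra). lra. }
  set (s0 := t / (1 - t)).
  assert (Hs0 : 0 < s0) by (unfold s0; apply Rdiv_lt_0_compat; lra).
  set (eta := Rmin 1 (eps * s0 / (3 * (2 * K + 1)))).
  assert (Heta : 0 < eta) by (unfold eta; apply Rmin_glb_lt; [lra| apply Rdiv_lt_0_compat; nra]).
  destruct (HTx eta Heta) as [N HN].
  exists N. intros n Hn.
  specialize (HN n Hn). unfold R_dist in HN. rewrite Rminus_0_r in HN.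
  set (en := vnorm (vsub (T (x n)) (x n))) in *.
  assert (Hen0 : 0 <= en) by apply vnorm_nonneg.
  rewrite Rabs_pos_eq in HN by auto.
  assert (Hen1 : en <= 1) by (pose proof (Rmin_l 1 (eps * s0 / (3 * (2 * K + 1)))); fold eta in H; lra).
  assert (Hen2 : en * (2 * K + 1) <= eps * s0 / 3).
  { assert (en <= eps * s0 / (3 * (2 * K + 1))) by (pose proof (Rmin_r 1 (eps * s0 / (3 * (2 * K + 1)))); fold eta in H; lra).
    apply Rmult_le_compat_r with (r := 2 * K + 1) in H; [|lra].
    replace (eps * s0 / (3 * (2 * K + 1)) * (2 * K + 1)) with (eps * s0 / 3) in H by (field; lra). lra. }
  set (p := vsub (x n) q). set (p' := vsub (x n) X). set (z := vsub (f X) X).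
  assert (Hxn := Hbdd n).
  assert (Hp : vnorm p <= Bx + vnorm q) by (unfold p; pose proof (vnorm_sub_tri (x n) q); lra).
  assert (HXn : vnorm X <= vnorm q + 1) by (pose proof (vnorm_sub_le X q); fold del in H; lra).
  assert (Hp' : vnorm p' <= Bx + vnorm q + 1) by (unfold p'; pose proof (vnorm_sub_tri (x n) X); lra).
  assert (HfXq : vnorm (vsub (f X) (f q)) <= a * del) by (apply Hfa; auto).
  assert (Hz : vnorm z <= vnorm w + 2).
  { unfold z. eapply Rle_trans. apply (vtri_sub _ (f q)).
    eapply Rle_trans. apply Rplus_le_compat_l. apply (vtri_sub _ q).
    rewrite (vnorm_sub_sym q X). fold w del. nra. }
  pose proof (vnorm_nonneg p) as Hp0. pose proof (vnorm_nonneg p') as Hp'0. pose proof (vnorm_nonneg z) as Hz0.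
  assert (HA : vnorm (vadd p (vscal s w)) <= K).
  { eapply Rle_trans. apply vtri. rewrite vnorm_scal_p by lra. unfold K. nra. }
  assert (HB : vnorm (vadd p' (vscal s z)) <= K).
  { eapply Rle_trans. apply vtri. rewrite vnorm_scal_p by lra. unfold K. nra. }
  assert (Hd1 : vnorm (vsub (vadd p (vscal s w)) (vadd p' (vscal s z))) <= 3 * del).
  { replace (vsub (vadd p (vscal s w)) (vadd p' (vscal s z)))
      with (vadd (vsub X q) (vscal s (vadd (vsub (f q) (f X)) (vsub X q)))) by (unfold p, p', w, z; vring).
    eapply Rle_trans. apply vtri. rewrite vnorm_scal_p by lra.
    assert (vnorm (vadd (vsub (f q) (f X)) (vsub X q)) <= a * del + del).
    { eapply Rle_trans. apply vtri. rewrite vnorm_sub_sym. fold del. lra. }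
    fold del.
    assert (s * vnorm (vadd (vsub (f q) (f X)) (vsub X q)) <= 1 * (a * del + del)).
    { apply Rmult_le_compat; try lra. apply vnorm_nonneg. }
    nra. }
  pose proof (sq_diff (vadd p (vscal s w)) (vadd p' (vscal s z))) as Hsq1.
  pose proof (vnorm_nonneg (vadd p (vscal s w))). pose proof (vnorm_nonneg (vadd p' (vscal s z))).
  assert (Hsq1' : vnorm (vadd p (vscal s w)) ^ 2 - vnorm (vadd p' (vscal s z)) ^ 2 <= 6 * K * del).
  { eapply Rle_trans. apply Hsq1.
    apply Rle_trans with (3 * del * (2 * K)). apply Rmult_le_compat; try lra. apply vnorm_nonneg. lra. }
  pose proof (sq_diff p' p) as Hsq2.
  replace (vsub p' p) with (vsub q X) in Hsq2 by (unfold p, p'; vring).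
  rewrite vnorm_sub_sym in Hsq2. fold del in Hsq2.
  assert (Hsq2' : vnorm p' ^ 2 - vnorm p ^ 2 <= 2 * K * del).
  { assert (vnorm p' + vnorm p <= 2 * K) by (unfold K; lra).
    assert (del * (vnorm p' + vnorm p) <= del * (2 * K)) by (apply Rmult_le_compat_l; lra).
    lra. }
  assert (Hgap := Hus s p' z ltac:(lra) ltac:(unfold K in *; lra) ltac:(unfold K in *; lra)).
  pose proof (slope3 p' z s0 s Hs0 ltac:(lra)) as Hsl.
  assert (Hid : vadd p' (vscal s0 z) = vsub (x n) (T X)) by (unfold p', z, s0; apply sigma0_id; auto; lra).
  rewrite Hid in Hsl.
  assert (HxTX : vnorm (vsub (x n) (T X)) <= en + vnorm p').
  { eapply Rle_trans. apply (vtri_sub _ (T (x n))). rewrite vnorm_sub_sym. fold en.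
    pose proof (HTne (x n) X (HxD n) HDX) as HH. fold p' in HH. lra. }
  assert (HxTX2 : vnorm (vsub (x n) (T X)) ^ 2 - vnorm p' ^ 2 <= en * (2 * K + 1)).
  { pose proof (vnorm_nonneg (vsub (x n) (T X))).
    assert (vnorm (vsub (x n) (T X)) ^ 2 <= (en + vnorm p') ^ 2) by (apply pow_incr; lra).
    assert (vnorm p' <= K) by (unfold K; lra). nra. }
  assert (Hm : s0 * (vnorm p' ^ 2 - vnorm (vsub p' (vscal s z)) ^ 2) <= s0 * (eps * s / 3)).
  { eapply Rle_trans. apply Hsl.
    apply Rle_trans with (s * (en * (2 * K + 1))). apply Rmult_le_compat_l; lra.
    apply Rle_trans with (s * (eps * s0 / 3)). apply Rmult_le_compat_l; lra. lra. }
  apply Rmult_le_reg_l in Hm; [|lra].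
  fold p. lra.
Qed.

Fixpoint ps (u : nat -> R) (n : nat) : R :=
  match n with O => 0 | Datatypes.S n => ps u n + u n end.

Lemma ps_sum (u : nat -> R) (n : nat) : ps u (Datatypes.S n) = sum_f_R0 u n.
Proof. induction n. simpl; ring. change (ps u (Datatypes.S (Datatypes.S n))) with (ps u (Datatypes.S n) + u (Datatypes.S n)).
  rewrite IHn. reflexivity. Qed.

Lemma ps_mono (u : nat -> R) : (forall n, 0 <= u n) -> forall m j, ps u m <= ps u (m + j).
Proof.
  intros H m j. induction j. rewrite Nat.add_0_r; lra.
  rewrite Nat.add_succ_r. simpl. specialize (H (m + j)%nat). lra.
Qed.

Lemma xu_lemma (a g tau : nat -> R) (e A : R) (N0 : nat)
  (Ha : forall n, 0 <= a n <= A) (Hg : forall n, 0 <= g n <= 1) (Ht : forall n, 0 <= tau n)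
  (He : 0 <= e)
  (Hgs : forall M, exists N, forall n, (n >= N)%nat -> M < ps g n)
  (Hts : forall eps, eps > 0 -> exists m0, forall m n, (m0 <= m)%nat -> (m <= n)%nat -> ps tau n - ps tau m <= eps)
  (Hrec : forall n, (n >= N0)%nat -> a (Datatypes.S n) <= (1 - g n) * a n + g n * e + tau n) :
  forall eps, eps > 0 -> exists M, forall n, (n >= M)%nat -> a n <= e + eps.
Proof.
  intros eps Heps.
  destruct (Hts (eps / 2) ltac:(lra)) as [m0 Hm0].
  set (m := Nat.max m0 N0).
  set (d := fun n => Rmax (a n - e) 0).
  set (St := fun n => ps tau n - ps tau m).
  set (h := fun n => Rmax (d n - St n) 0).
  assert (HA : 0 <= A) by (pose proof (Ha O); lra).
  assert (HSt : forall j, 0 <= St (m + j)%nat).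
  { intro j. unfold St. pose proof (ps_mono tau Ht m j). lra. }
  assert (Hstep : forall j, h (m + Datatypes.S j)%nat <= (1 - g (m + j)%nat) * h (m + j)%nat).
  { intro j. rewrite Nat.add_succ_r. set (n := (m + j)%nat).
    assert (Hn : (n >= N0)%nat) by (unfold n, m; lia).
    specialize (Hrec n Hn). pose proof (Hg n). pose proof (Ht n). pose proof (HSt j) as HS. fold n in HS.
    assert (Hd : d (Datatypes.S n) <= (1 - g n) * d n + tau n).
    { unfold d. pose proof (Rmax_l (a n - e) 0). pose proof (Rmax_r (a n - e) 0).
      apply Rmax_lub. assert ((1 - g n) * (a n - e) <= (1 - g n) * Rmax (a n - e) 0) by (apply Rmult_le_compat_l; lra).
      nra. nra. }
    assert (HSt1 : St (Datatypes.S n) = St n + tau n) by (unfold St; simpl; ring).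
    unfold h. apply Rmax_lub.
    - rewrite HSt1. pose proof (Rmax_l (d n - St n) 0).
      assert ((1 - g n) * (d n - St n) <= (1 - g n) * Rmax (d n - St n) 0) by (apply Rmult_le_compat_l; lra).
      nra.
    - pose proof (Rmax_r (d n - St n) 0). nra. }
  assert (Hh0 : forall n, 0 <= h n) by (intro; unfold h; apply Rmax_r).
  assert (Hind : forall j, h (m + j)%nat * (1 + (ps g (m + j) - ps g m)) <= h m).
  { induction j.
    - rewrite Nat.add_0_r. lra.
    - pose proof (Hstep j). pose proof (Hg (m + j)%nat).
      pose proof (ps_mono g (fun n => proj1 (Hg n)) m j).
      rewrite Nat.add_succ_r. simpl ps. rewrite <- Nat.add_succ_r.
      set (G := ps g (m + j) - ps g m) in *.
      set (gg := g (m + j)%nat) in *.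
      assert (0 <= G) by (unfold G; lra).
      pose proof (Hh0 (m + j)%nat). pose proof (Hh0 (m + Datatypes.S j)%nat).
      assert (h (m + Datatypes.S j)%nat * (1 + (ps g (m + j) + gg - ps g m))
              <= (1 - gg) * h (m + j)%nat * (1 + G + gg)).
      { replace (1 + (ps g (m + j) + gg - ps g m)) with (1 + G + gg) by (unfold G; ring).
        apply Rmult_le_compat_r; lra. }
      assert ((1 - gg) * h (m + j)%nat * (1 + G + gg) <= h (m + j)%nat * (1 + G)).
      { assert ((1 - gg) * (1 + G + gg) <= 1 + G) by nra. nra. }
      lra. }
  assert (Hhm : h m <= A).
  { unfold h, St, d. replace (ps tau m - ps tau m) with 0 by ring. rewrite Rminus_0_r.
    pose proof (Ha m). apply Rmax_lub; [apply Rmax_lub|]; lra. }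
  destruct (Hgs (ps g m + 2 * A / eps)) as [N1 HN1].
  exists (Nat.max N1 m). intros n Hn.
  replace n with (m + (n - m))%nat in * by lia.
  specialize (HN1 (m + (n - m))%nat ltac:(lia)).
  specialize (Hind (n - m)%nat).
  set (j := (n - m)%nat) in *.
  pose proof (Hh0 (m + j)%nat).
  assert (Hhs : h (m + j)%nat <= eps / 2).
  { assert (h (m + j)%nat * (1 + 2 * A / eps) <= A).
    { assert (h (m + j)%nat * (1 + 2 * A / eps) <= h (m + j)%nat * (1 + (ps g (m + j) - ps g m))).
      apply Rmult_le_compat_l; lra. lra. }
    assert (0 <= 2 * A / eps) by (unfold Rdiv; apply Rmult_le_pos; [lra| left; apply Rinv_0_lt_compat; lra]).
    apply Rmult_le_reg_r with (1 + 2 * A / eps). lra.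
    replace (eps / 2 * (1 + 2 * A / eps)) with (eps / 2 + A) by (field; lra). lra. }
  assert (Hdd : d (m + j)%nat <= h (m + j)%nat + St (m + j)%nat).
  { unfold h. pose proof (Rmax_l (d (m + j)%nat - St (m + j)%nat) 0). lra. }
  assert (HStj : St (m + j)%nat <= eps / 2) by (unfold St; apply Hm0; lia).
  assert (a (m + j)%nat - e <= d (m + j)%nat) by (unfold d; apply Rmax_l).
  lra.
Qed.

Lemma rec_alg (al L A B Y rho tau : R) :
  0 < L < 1 -> 0 <= al <= 1 - L -> 0 <= A -> 0 <= B -> 0 <= rho -> 0 <= tau ->
  Y ^ 2 <= A ^ 2 + tau ->
  B ^ 2 <= (1 - al) ^ 2 * Y ^ 2 + al * L * (A ^ 2 + B ^ 2) + al * rho ->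
  B ^ 2 <= (1 - al * (1 - L)) * A ^ 2 + al * (1 - L) * (rho / (1 - L) ^ 2) + tau / (1 - L).
Proof.
  intros HL Hal HA HB Hrho Htau HY HB2.
  assert (H1 : (1 - al * L) * B ^ 2 <= ((1 - al) ^ 2 + al * L) * A ^ 2 + tau + al * rho).
  { assert ((1 - al) ^ 2 * Y ^ 2 <= (1 - al) ^ 2 * (A ^ 2 + tau)) by (apply Rmult_le_compat_l; [apply pow2_ge_0| lra]).
    assert ((1 - al) ^ 2 * tau <= tau) by (assert ((1-al)^2 <= 1) by nra; nra).
    nra. }
  assert (H2 : ((1 - al) ^ 2 + al * L) * A ^ 2 <= (1 - al * (1 - L)) * (1 - al * L) * A ^ 2).
  { apply Rmult_le_compat_r. nra.
    assert (al * (al * (1 - L + L ^ 2)) <= al * (1 - L)).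
    { apply Rmult_le_compat_l. lra. assert (1 - L + L ^ 2 <= 1) by nra. nra. }
    nra. }
  assert (H3 : 1 - L <= 1 - al * L) by nra.
  assert (H4 : B ^ 2 <= (1 - al * (1 - L)) * A ^ 2 + (tau + al * rho) / (1 - al * L)).
  { apply Rmult_le_reg_l with (1 - al * L). lra.
    replace ((1 - al * L) * ((1 - al * (1 - L)) * A ^ 2 + (tau + al * rho) / (1 - al * L)))
      with ((1 - al * (1 - L)) * (1 - al * L) * A ^ 2 + (tau + al * rho)) by (field; lra).
    lra. }
  assert (H5 : (tau + al * rho) / (1 - al * L) <= (tau + al * rho) / (1 - L)).
  { apply Rmult_le_compat_l. nra. apply Rinv_le_contravar; lra. }
  assert (al * (1 - L) * (rho / (1 - L) ^ 2) + tau / (1 - L) = (tau + al * rho) / (1 - L)) by (field; lra).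
  lra.
Qed.

Lemma rec_vec {E : RBanach} (u P0 v w r : E) (al s e1 Y R : R) :
  0 <= al <= 1 -> 0 < s <= 1 -> 0 <= R ->
  u = vadd (vscal (1 - al) P0) (vscal al v) -> v = vadd w r ->
  vnorm (vadd u (vscal s w)) ^ 2 - vnorm u ^ 2 <= e1 * s ->
  vnorm P0 <= Y -> vnorm r <= R ->
  vnorm u ^ 2 <= (1 - al) ^ 2 * Y ^ 2 + al * (e1 + 2 * (vnorm u + s * vnorm w) * R + s * R ^ 2).
Proof.
  intros Hal Hs HR Hu Hv HKL HY Hr.
  pose proof (slope3 u (vscal al v) s 1 ltac:(lra) ltac:(lra)) as H.
  replace (vsub u (vscal 1 (vscal al v))) with (vscal (1 - al) P0) in H by (rewrite Hu; vring).
  rewrite vnorm_scal_p in H by lra.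
  replace (vadd u (vscal s (vscal al v))) with (vadd (vadd u (vscal (s * al) w)) (vscal (s * al) r)) in H
    by (rewrite Hv; vring).
  assert (HP : vnorm (vadd u (vscal (s * al) w)) ^ 2 <= vnorm u ^ 2 + al * e1 * s).
  { replace (vadd u (vscal (s * al) w)) with (vadd (vscal al (vadd u (vscal s w))) (vscal (1 - al) u)) by vring.
    eapply Rle_trans. apply conv_sq. lra. nra. }
  assert (HP2 : vnorm (vadd u (vscal (s * al) w)) <= vnorm u + s * vnorm w).
  { eapply Rle_trans. apply vtri. rewrite vnorm_scal_p by nra.
    pose proof (vnorm_nonneg w). assert (0 <= s * vnorm w) by nra.
    assert (al * (s * vnorm w) <= 1 * (s * vnorm w)) by (apply Rmult_le_compat_r; lra).
    replace (s * al * vnorm w) with (al * (s * vnorm w)) by ring. lra. }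
  set (P := vnorm (vadd u (vscal (s * al) w))) in *.
  assert (HQ : vnorm (vadd (vadd u (vscal (s * al) w)) (vscal (s * al) r)) <= P + s * al * R).
  { eapply Rle_trans. apply vtri. rewrite vnorm_scal_p by nra. fold P.
    assert (0 <= s * al) by nra. nra. }
  pose proof (vnorm_nonneg (vadd (vadd u (vscal (s * al) w)) (vscal (s * al) r))) as HQ0.
  pose proof (vnorm_nonneg u) as Hu0. pose proof (vnorm_nonneg P0). pose proof (vnorm_nonneg w).
  assert (HP0 : 0 <= P) by apply vnorm_nonneg.
  set (Qn := vnorm (vadd (vadd u (vscal (s * al) w)) (vscal (s * al) r))) in *.
  assert (HQ2 : Qn ^ 2 <= P ^ 2 + 2 * P * (s * al * R) + (s * al * R) ^ 2).
  { assert (Qn ^ 2 <= (P + s * al * R) ^ 2) by (apply pow_incr; lra). nra. }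
  assert (HQ3 : Qn ^ 2 - vnorm u ^ 2 <= s * (al * (e1 + 2 * (vnorm u + s * vnorm w) * R + s * R ^ 2))).
  { assert (2 * P * (s * al * R) <= 2 * (vnorm u + s * vnorm w) * (s * al * R)).
    { apply Rmult_le_compat_r. assert (0 <= s * al) by nra. nra. lra. }
    assert ((s * al * R) ^ 2 <= s * al * (s * R ^ 2)).
    { assert (al ^ 2 <= al) by nra. assert (0 <= s ^ 2 * R ^ 2) by nra.
      replace ((s * al * R) ^ 2) with (al ^ 2 * (s ^ 2 * R ^ 2)) by ring.
      replace (s * al * (s * R ^ 2)) with (al * (s ^ 2 * R ^ 2)) by ring.
      apply Rmult_le_compat_r; lra. }
    nra. }
  assert (HY2 : ((1 - al) * vnorm P0) ^ 2 <= (1 - al) ^ 2 * Y ^ 2).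
  { rewrite Rpow_mult_distr. apply Rmult_le_compat_l. nra. apply pow_incr; lra. }
  assert (Hfin : s * (vnorm u ^ 2 - (1 - al) ^ 2 * Y ^ 2) <= s * (al * (e1 + 2 * (vnorm u + s * vnorm w) * R + s * R ^ 2))).
  { assert (s * (vnorm u ^ 2 - (1 - al) ^ 2 * Y ^ 2) <= s * (vnorm u ^ 2 - ((1 - al) * vnorm P0) ^ 2))
      by (apply Rmult_le_compat_l; lra).
    lra. }
  apply Rmult_le_reg_l in Hfin; lra.
Qed.

Lemma ps_scale (u : nat -> R) (c : R) (n : nat) : ps (fun k => u k * c) n = ps u n * c.
Proof. induction n; simpl. ring. rewrite IHn. ring. Qed.

Lemma gs_from_cv (al : nat -> R) (c : R) : cv_infty (fun N => sum_f_R0 al N) -> 0 < c ->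
  forall M, exists N, forall n, (n >= N)%nat -> M < ps (fun k => al k * c) n.
Proof.
  intros Hcv Hc M. destruct (Hcv (M / c)) as [N HN]. exists (Datatypes.S N). intros n Hn.
  destruct n as [|n]. lia. rewrite ps_scale, ps_sum.
  specialize (HN n ltac:(lia)). apply Rmult_lt_compat_r with (r := c) in HN; auto.
  replace (M / c * c) with M in HN by (field; lra). lra.
Qed.

Lemma ts_from_cv (d : nat -> R) (l C : R) : Un_cv (fun N => sum_f_R0 d N) l -> 0 <= C ->
  forall eps, eps > 0 -> exists m0, forall m n, (m0 <= m)%nat -> (m <= n)%nat ->
    ps (fun k => d k * C) n - ps (fun k => d k * C) m <= eps.
Proof.
  intros Hl HC eps Heps.
  pose proof (CV_Cauchy _ (exist _ l Hl)) as Hc.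
  destruct (Hc (eps / (C + 1)) ltac:(apply Rdiv_lt_0_compat; lra)) as [N HN].
  exists (Datatypes.S N). intros m n Hm Hmn.
  destruct m as [|m]; [lia|]. destruct n as [|n]; [lia|].
  rewrite !ps_scale, !ps_sum.
  specialize (HN n m ltac:(lia) ltac:(lia)). unfold Rdist in HN.
  assert (sum_f_R0 d n - sum_f_R0 d m < eps / (C + 1)) by (pose proof (Rle_abs (sum_f_R0 d n - sum_f_R0 d m)); lra).
  assert (H2 : (sum_f_R0 d n - sum_f_R0 d m) * C <= eps / (C + 1) * C).
  { destruct (Rle_dec 0 (sum_f_R0 d n - sum_f_R0 d m)). apply Rmult_le_compat_r; lra.
    apply Rle_trans with 0. nra. apply Rmult_le_pos; [apply Rlt_le, Rdiv_lt_0_compat|]; lra. }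
  assert (eps / (C + 1) * C <= eps).
  { unfold Rdiv. apply Rle_trans with (eps * / (C + 1) * (C + 1)).
    apply Rmult_le_compat_l. apply Rmult_le_pos. lra. left; apply Rinv_0_lt_compat; lra. lra.
    rewrite Rmult_assoc, Rinv_l. lra. lra. }
  lra.
Qed.

Theorem theorem2p1
  (E : RBanach) (HE : uniformly_smooth E)
  (D : E -> Prop) (HDne : exists z, D z) (HDcl : bclosed_set D) (HDcv : bconvex_set D)
  (T : E -> E) (HTD : maps_into D T) (HTne : nonexpansive_on D T)
  (HFT : exists p, D p /\ T p = p)
  (fn gn : nat -> E -> E) (HfnD : forall n, maps_into D (fn n)) (HgnD : forall n, maps_into D (gn n))
  (f : E -> E)
  (alpha beta delta : nat -> R) (x y : nat -> E)
  (Hx0 : D (x 0%nat))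
  (Hy : forall n, y n = vadd (vscal (beta n) (gn n (x n))) (vscal (1 - beta n) (T (x n))))
  (Hx : forall n, x (S n) = vadd (vscal (alpha n) (fn n (x n))) (vscal (1 - alpha n) (T (y n))))
  (* (i) *)
  (Hi1 : exists L, 0 < L < 1 /\ forall n a b, D a -> D b ->
           vnorm (vsub (fn n a) (fn n b)) <= L * vnorm (vsub a b))
  (Hi2 : forall eps, eps > 0 -> exists N, forall n a, (n >= N)%nat -> D a ->
           vnorm (vsub (fn n a) (f a)) < eps)
  (Hf : contraction_on D f)
  (* (ii) *)
  (Hii : exists M, M > 0 /\ forall n a, D a ->
           beta n * vnorm (vsub (gn n a) a) <= delta n * (vnorm a + M))
  (Hdelta_nn : forall n, 0 <= delta n)
  (Hdelta_sum : exists l, Un_cv (fun N => sum_f_R0 delta N) l)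
  (* (iii) *)
  (Halpha01 : forall n, 0 <= alpha n <= 1)
  (Halpha0 : Un_cv alpha 0)
  (Halpha_sum : cv_infty (fun N => sum_f_R0 alpha N))
  (* (iv) *)
  (Hbeta : forall n, 0 < beta n <= 1)
  (* (v) *)
  (Hbdd : exists B, forall n, vnorm (x n) <= B)
  (HTx : Un_cv (fun n => vnorm (vsub (T (x n)) (x n))) 0) :
  forall q, is_Q D T f q -> seq_conv x q.
Proof.
  intros q Hq.
  destruct Hi1 as [L [HL HfnL]]. destruct Hii as [M [HM Hgb]].
  destruct Hdelta_sum as [l Hl]. destruct Hbdd as [Bx HBx].
  destruct (xt_exists D HDne HDcl HDcv T HTD HTne f Hf) as [xt Hxt].
  pose proof (Hq xt Hxt) as Hqc.
  destruct (q_props D HDcl T HTD HTne f Hf xt Hxt q Hqc) as [HDq HTq].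
  destruct Hf as [HfD [a [Ha Hfa]]].
  assert (HyD : forall n, D (x n) -> D (y n)).
  { intros n H. rewrite Hy. apply HDcv. apply HgnD; auto. apply HTD; auto. pose proof (Hbeta n); lra. }
  assert (HxD : forall n, D (x n)).
  { induction n. auto. rewrite Hx. apply HDcv. apply HfnD; auto. apply HTD; auto. apply Halpha01. }
  pose proof (key_lemma HE D T HTne f a Ha Hfa x HxD Bx HBx HTx xt Hxt q HDq Hqc) as KL.
  assert (HBx0 : 0 <= Bx) by (pose proof (HBx O); pose proof (vnorm_nonneg (x O)); lra).
  pose proof (vnorm_nonneg q) as Hq0.
  set (Kx := Bx + vnorm q).
  assert (HA : forall n, vnorm (vsub (x n) q) <= Kx).
  { intro n. pose proof (vnorm_sub_tri (x n) q). pose proof (HBx n). unfold Kx; lra. }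
  assert (Hdl : forall n, delta n <= l).
  { assert (Hgr : Un_growing (fun N => sum_f_R0 delta N)).
    { intro n. simpl. pose proof (Hdelta_nn (S n)). lra. }
    intro n. eapply Rle_trans; [| apply (growing_ineq _ _ Hgr Hl n)].
    destruct n. simpl; lra. simpl. pose proof (cond_pos_sum delta n Hdelta_nn). lra. }
  assert (Hl0 : 0 <= l) by (pose proof (Hdl O); pose proof (Hdelta_nn O); lra).
  set (C0 := Bx + M).
  set (C5 := 2 * Kx * C0 + l * C0 ^ 2).
  assert (HC5 : 0 <= C5) by (unfold C5, C0, Kx; assert (0 <= l * (Bx + M) ^ 2) by (apply Rmult_le_pos; nra); nra).
  assert (HYb : forall n, vnorm (vsub (y n) q) <= vnorm (vsub (x n) q) + delta n * C0).
  { intro n. rewrite Hy.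
    replace (vsub (vadd (vscal (beta n) (gn n (x n))) (vscal (1 - beta n) (T (x n)))) q)
      with (vadd (vscal (beta n) (vsub (gn n (x n)) (x n)))
              (vadd (vscal (beta n) (vsub (x n) q)) (vscal (1 - beta n) (vsub (T (x n)) q)))) by vring.
    pose proof (Hbeta n) as Hb.
    eapply Rle_trans. apply vtri. eapply Rle_trans. apply Rplus_le_compat_l. apply vtri.
    rewrite !vnorm_scal_p by lra.
    pose proof (HTne (x n) q (HxD n) HDq) as HT1. rewrite HTq in HT1.
    pose proof (Hgb n (x n) (HxD n)). pose proof (HBx n). pose proof (Hdelta_nn n).
    assert (delta n * (vnorm (x n) + M) <= delta n * C0) by (unfold C0; apply Rmult_le_compat_l; lra).
    pose proof (vnorm_nonneg (vsub (x n) q)).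
    assert ((1 - beta n) * vnorm (vsub (T (x n)) q) <= (1 - beta n) * vnorm (vsub (x n) q)) by (apply Rmult_le_compat_l; lra).
    nra. }
  assert (HY2 : forall n, vnorm (vsub (y n) q) ^ 2 <= vnorm (vsub (x n) q) ^ 2 + delta n * C5).
  { intro n. pose proof (HYb n). pose proof (vnorm_nonneg (vsub (y n) q)).
    pose proof (vnorm_nonneg (vsub (x n) q)). pose proof (HA n). pose proof (Hdl n). pose proof (Hdelta_nn n).
    assert (HC0 : 0 <= C0) by (unfold C0; lra).
    set (A := vnorm (vsub (x n) q)) in *. set (dn := delta n) in *.
    assert (vnorm (vsub (y n) q) ^ 2 <= (A + dn * C0) ^ 2) by (apply pow_incr; lra).
    assert (dn * (2 * A * C0) <= dn * (2 * Kx * C0)) by (apply Rmult_le_compat_l; nra).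
    assert (dn * (dn * C0 ^ 2) <= dn * (l * C0 ^ 2)) by (apply Rmult_le_compat_l; nra).
    unfold C5. nra. }
  unfold seq_conv. intros eps Heps.
  set (e := eps ^ 2 / 4).
  assert (He : 0 < e) by (unfold e; nra).
  set (e' := e * (1 - L) ^ 2).
  assert (He' : 0 < e') by (unfold e'; apply Rmult_lt_0_compat; [lra| apply pow_lt; lra]).
  set (w := vsub (f q) q).
  pose proof (vnorm_nonneg w) as Hw0.
  destruct (KL (e' / 3) ltac:(lra)) as [s0 [Hs0 KLs]].
  set (Cs := (2 * vnorm w + Kx + 1) * (Kx + 1)).
  assert (HCs : 0 <= Cs) by (unfold Cs, Kx; nra).
  set (s := Rmin (s0 / 2) (Rmin 1 (e' / (3 * Cs + 1)))).
  assert (Hs : 0 < s < s0).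
  { unfold s. split. repeat apply Rmin_glb_lt; try lra. apply Rdiv_lt_0_compat; lra.
    pose proof (Rmin_l (s0 / 2) (Rmin 1 (e' / (3 * Cs + 1)))). lra. }
  assert (Hs1 : s <= 1) by (unfold s; eapply Rle_trans; [apply Rmin_r| apply Rmin_l]).
  assert (HsCs : s * Cs <= e' / 3).
  { assert (s <= e' / (3 * Cs + 1)) by (unfold s; eapply Rle_trans; [apply Rmin_r| apply Rmin_r]).
    apply Rmult_le_compat_r with (r := 3 * Cs + 1) in H; [|lra].
    replace (e' / (3 * Cs + 1) * (3 * Cs + 1)) with e' in H by (field; lra). nra. }
  destruct (KLs s Hs) as [N1 HN1].
  set (eps2 := Rmin 1 (e' / (3 * (2 * Kx + 1)))).
  assert (Heps2 : 0 < eps2) by (unfold eps2; apply Rmin_glb_lt; [lra| apply Rdiv_lt_0_compat; unfold Kx; lra]).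
  destruct (Hi2 eps2 Heps2) as [N2 HN2].
  destruct (Halpha0 (1 - L) ltac:(lra)) as [N3 HN3].
  assert (Hrec : forall n, (n >= Nat.max N1 (Nat.max N2 N3))%nat ->
     vnorm (vsub (x (S n)) q) ^ 2 <= (1 - alpha n * (1 - L)) * vnorm (vsub (x n) q) ^ 2
        + alpha n * (1 - L) * e + delta n * (C5 / (1 - L))).
  { intros n Hn.
    specialize (HN1 (S n) ltac:(lia)). specialize (HN2 n q ltac:(lia) HDq).
    specialize (HN3 n ltac:(lia)). unfold R_dist in HN3. rewrite Rminus_0_r in HN3.
    pose proof (Halpha01 n) as Han. rewrite Rabs_pos_eq in HN3 by lra.
    set (en := vnorm (vsub (fn n q) (f q))) in *.
    pose proof (vnorm_nonneg (vsub (fn n q) (f q))) as Hen0. fold en in Hen0.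
    assert (Hen1 : en <= 1) by (pose proof (Rmin_l 1 (e' / (3 * (2 * Kx + 1)))); fold eps2 in H; lra).
    assert (Hen2 : en * (2 * Kx + 1) <= e' / 3).
    { assert (en <= e' / (3 * (2 * Kx + 1))) by (pose proof (Rmin_r 1 (e' / (3 * (2 * Kx + 1)))); fold eps2 in H; lra).
      apply Rmult_le_compat_r with (r := 2 * Kx + 1) in H; [|unfold Kx; lra].
      replace (e' / (3 * (2 * Kx + 1)) * (2 * Kx + 1)) with (e' / 3) in H by (field; unfold Kx; lra). lra. }
    set (A := vnorm (vsub (x n) q)).
    set (B := vnorm (vsub (x (S n)) q)).
    assert (HA0 : 0 <= A) by apply vnorm_nonneg. assert (HB0 : 0 <= B) by apply vnorm_nonneg.
    assert (HAK : A <= Kx) by apply HA. assert (HBK : B <= Kx) by apply HA.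
    set (R := L * A + en).
    assert (HR0 : 0 <= R) by (unfold R; nra).
    assert (HRK : R <= Kx + 1) by (unfold R; nra).
    pose proof (rec_vec (vsub (x (S n)) q) (vsub (T (y n)) q) (vsub (fn n (x n)) q) w
                 (vsub (fn n (x n)) (f q)) (alpha n) s (e' / 3) (vnorm (vsub (y n) q)) R
                 Han ltac:(lra) HR0) as Hrv.
    assert (Hrv2 : B ^ 2 <= (1 - alpha n) ^ 2 * vnorm (vsub (y n) q) ^ 2 +
                   alpha n * (e' / 3 + 2 * (B + s * vnorm w) * R + s * R ^ 2)).
    { apply Hrv.
      - rewrite Hx. vring.
      - unfold w. vring.
      - exact HN1.
      - pose proof (HTne (y n) q (HyD n (HxD n)) HDq) as HH. rewrite HTq in HH. exact HH.
      - eapply Rle_trans. apply (vtri_sub _ (fn n q)).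
        pose proof (HfnL n (x n) q (HxD n) HDq). fold A in H. unfold R. fold en. lra. }
    set (rho := e' / 3 + 2 * B * en + s * (2 * vnorm w * R + R ^ 2)).
    assert (Hrho0 : 0 <= rho) by (unfold rho; assert (0 <= s * (2 * vnorm w * R + R ^ 2)) by (apply Rmult_le_pos; nra); nra).
    assert (Hrho : rho <= e').
    { assert (2 * B * en <= e' / 3).
      { assert (2 * B * en <= 2 * Kx * en) by (apply Rmult_le_compat_r; lra). nra. }
      assert (s * (2 * vnorm w * R + R ^ 2) <= s * Cs).
      { apply Rmult_le_compat_l. lra. unfold Cs.
        replace (2 * vnorm w * R + R ^ 2) with ((2 * vnorm w + R) * R) by ring.
        apply Rmult_le_compat; nra. }
      unfold rho. lra. }
    assert (Hmain : B ^ 2 <= (1 - alpha n) ^ 2 * vnorm (vsub (y n) q) ^ 2 + alpha n * L * (A ^ 2 + B ^ 2) + alpha n * rho).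
    { assert (2 * (B + s * vnorm w) * R = 2 * B * (L * A) + (2 * B * en + s * (2 * vnorm w * R))) by (unfold R; ring).
      assert (2 * B * (L * A) <= L * (A ^ 2 + B ^ 2)).
      { assert (0 <= L * (A - B) ^ 2) by (apply Rmult_le_pos; [lra| apply pow2_ge_0]). nra. }
      assert (alpha n * (2 * B * (L * A)) <= alpha n * (L * (A ^ 2 + B ^ 2))) by (apply Rmult_le_compat_l; lra).
      unfold rho. nra. }
    pose proof (rec_alg (alpha n) L A B (vnorm (vsub (y n) q)) rho (delta n * C5) HL
                  ltac:(lra) HA0 HB0 Hrho0 ltac:(pose proof (Hdelta_nn n); nra) (HY2 n) Hmain) as Hfin.
    assert (alpha n * (1 - L) * (rho / (1 - L) ^ 2) <= alpha n * (1 - L) * e).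
    { apply Rmult_le_compat_l. nra.
      unfold e' in Hrho. apply Rmult_le_reg_r with ((1 - L) ^ 2). nra.
      replace (rho / (1 - L) ^ 2 * (1 - L) ^ 2) with rho by (field; lra). lra. }
    assert (delta n * C5 / (1 - L) = delta n * (C5 / (1 - L))) by (field; lra).
    lra. }
  destruct (xu_lemma (fun n => vnorm (vsub (x n) q) ^ 2) (fun k => alpha k * (1 - L))
              (fun k => delta k * (C5 / (1 - L))) e (Kx ^ 2) (Nat.max N1 (Nat.max N2 N3)))
    with (eps := e) as [M' HM'].
  - intro n. split. apply pow2_ge_0. apply pow_incr. split. apply vnorm_nonneg. apply HA.
  - intro n. pose proof (Halpha01 n). split; nra.
  - intro n. apply Rmult_le_pos. apply Hdelta_nn. unfold Rdiv; apply Rmult_le_pos; [lra| left; apply Rinv_0_lt_compat; lra].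
  - lra.
  - apply gs_from_cv; auto; lra.
  - apply (ts_from_cv delta l). auto. apply Rmult_le_pos; [lra| left; apply Rinv_0_lt_compat; lra].
  - intros n Hn. specialize (Hrec n Hn). simpl. lra.
  - exact He.
  - exists M'. intros n Hn. specialize (HM' n Hn). simpl in HM'.
    pose proof (vnorm_nonneg (vsub (x n) q)).
    destruct (Rlt_dec (vnorm (vsub (x n) q)) eps) as [Hlt | Hge]; auto.
    exfalso. apply Rnot_lt_le in Hge.
    assert (eps ^ 2 <= vnorm (vsub (x n) q) ^ 2) by (apply pow_incr; lra).
    unfold e in HM'. nra.
Qed.
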